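(* Let $M$ be a monoid that embeds into a group $G$ (identify $M$ with its image in $G$). Suppose that $\mathbb Z^{+}[M]$ has nonzero common right multiples. Then for any $a,b\in M$ there exist $k\ge 1$ and signs $\epsilon_1,\delta_1,\ldots,\epsilon_k,\delta_k\in\{1,-1\}$ such that $a^{\epsilon_1}b^{\delta_1}a^{\epsilon_2}b^{\delta_2}\cdots a^{\epsilon_k}b^{\delta_k}=1$ holds in $G$.
   Context: For a monoid $M$, $\mathbb Z^{+}[M]$ denotes the set of elements of the monoid ring $\mathbb Z[M]$ that are linear combinations of elements of $M$ with positive integer coefficients, together with $0$; it is closed under multiplication. We say $\mathbb Z^{+}[M]$ has nonzero common right multiples (satisfies the Ore condition) if for any $p,q\in\mathbb Z^{+}[M]$ there exist $u,v\in\mathbb Z^{+}[M]$, not both zero, with $pu=qv$. *)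

(* Defs.v *)
From Stdlib Require Import List Permutation.
Import ListNotations.

Record is_monoid (M : Type) (mul : M -> M -> M) (e : M) : Prop := {
  mon_assoc : forall x y z, mul x (mul y z) = mul (mul x y) z;
  mon_unit_l : forall x, mul e x = x;
  mon_unit_r : forall x, mul x e = x }.

Record is_group (G : Type) (mul : G -> G -> G) (inv : G -> G) (e : G) : Prop := {
  grp_assoc : forall x y z, mul x (mul y z) = mul (mul x y) z;
  grp_unit_l : forall x, mul e x = x;
  grp_unit_r : forall x, mul x e = x;
  grp_inv_l : forall x, mul (inv x) x = e;
  grp_inv_r : forall x, mul x (inv x) = e }.

Definition monoid_embedding {M G : Type} (mulM : M -> M -> M) (eM : M)
    (mulG : G -> G -> G) (eG : G) (f : M -> G) : Prop :=
  (forall x y, f x = f y -> x = y) /\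
  (forall x y, f (mulM x y) = mulG (f x) (f y)) /\
  f eM = eG.

(* Z^+[M]: an element sum_i n_i m_i (n_i positive integers) or 0 is represented
   as a finite formal sum, i.e. a list of elements of M (with repetitions);
   two lists represent the same element iff they are permutations of each
   other; the empty list is 0. *)
Definition zplus (M : Type) := list M.

Definition zplus_eq {M : Type} (p q : zplus M) : Prop := Permutation p q.

Definition zplus_mul {M : Type} (mul : M -> M -> M) (p q : zplus M) : zplus M :=
  flat_map (fun x => map (fun y => mul x y) q) p.

Definition zplus_right_ore {M : Type} (mul : M -> M -> M) : Prop :=
  forall p q : zplus M, exists u v : zplus M,
    (u <> [] \/ v <> []) /\ zplus_eq (zplus_mul mul p u) (zplus_mul mul q v).

Definition sgpow {G : Type} (inv : G -> G) (s : bool) (x : G) : G :=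
  if s then x else inv x.

(* a^{e1} b^{d1} ... a^{ek} b^{dk} for the list [(e1,d1); ...; (ek,dk)] *)
Definition alt_word {G : Type} (mul : G -> G -> G) (inv : G -> G) (e : G)
    (a b : G) (signs : list (bool * bool)) : G :=
  fold_right (fun sd acc => mul (mul (sgpow inv (fst sd) a) (sgpow inv (snd sd) b)) acc)
    e signs.

(* Main.v *)
Require Import Defs.
From Stdlib Require Import List.
From Stdlib Require Import Permutation Arith Lia Classical.
Import ListNotations.

Lemma iter_lt (h : nat -> nat) N x :
  (forall y, y < N -> h y < N) -> x < N -> forall i, Nat.iter i h x < N.
Proof. intros Hh Hx i; induction i; simpl; auto. Qed.

Lemma iter_return (h : nat -> nat) N x :
  (forall y, y < N -> h y < N) ->
  (forall y z, y < N -> z < N -> h y = h z -> y = z) -> x < N ->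
  exists k, 1 <= k /\ Nat.iter k h x = x.
Proof.
  intros Hh Hinj Hx.
  assert (Hc : forall i j, Nat.iter i h x = Nat.iter (i + j) h x -> x = Nat.iter j h x).
  { induction i; intros j E; simpl in *; auto.
    apply IHi. apply Hinj; auto; apply iter_lt; auto. }
  destruct (classic (exists k, 1 <= k /\ Nat.iter k h x = x)) as [H|H]; auto.
  exfalso.
  set (l := map (fun i => Nat.iter i h x) (seq 0 (S N))).
  assert (ND : NoDup l).
  { apply (NoDup_nth l 0). unfold l; rewrite length_map, length_seq.
    intros i j Hi Hj E.
    unfold l in E.
    rewrite (@nth_indep _ _ i 0 (Nat.iter 0 h x)) in E by (rewrite length_map, length_seq; lia).
    rewrite (@nth_indep _ _ j 0 (Nat.iter 0 h x)) in E by (rewrite length_map, length_seq; lia).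
    rewrite !(map_nth (fun i => Nat.iter i h x)) in E.
    rewrite !seq_nth in E by lia. simpl in E.
    destruct (Nat.lt_total i j) as [Hij|[Hij|Hij]]; auto; exfalso.
    - replace j with (i + (j - i)) in E by lia.
      apply Hc in E. apply H. exists (j - i). split; [lia|auto].
    - replace i with (j + (i - j)) in E by lia.
      symmetry in E. apply Hc in E. apply H. exists (i - j). split; [lia|auto]. }
  assert (Inc : incl l (seq 0 N)).
  { intros y Hy. unfold l in Hy. apply in_map_iff in Hy.
    destruct Hy as [i [<- _]]. apply in_seq. pose proof (iter_lt h N x Hh Hx i). lia. }
  pose proof (NoDup_incl_length ND Inc) as Hl.
  unfold l in Hl; rewrite length_map, !length_seq in Hl. lia.
Qed.

Definition pp (n l : nat) : nat := if l <? n then l + n else l - n.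

Lemma pp_lt n l : l < n + n -> pp n l < n + n.
Proof. unfold pp; destruct (Nat.ltb_spec l n); lia. Qed.

Lemma pp_inj n y z : y < n + n -> z < n + n -> pp n y = pp n z -> y = z.
Proof. unfold pp; destruct (Nat.ltb_spec y n); destruct (Nat.ltb_spec z n); lia. Qed.

Lemma match_nth {T} (L R : list T) (f0 : nat -> nat) d :
  (forall r, nth_error R r = nth_error L (f0 r)) ->
  forall r, r < length R -> f0 r < length L /\ nth r R d = nth (f0 r) L d.
Proof.
  intros H r Hr. pose proof (nth_error_nth' R d Hr) as E.
  rewrite H in E. split.
  - apply nth_error_Some; congruence.
  - symmetry; apply nth_error_nth; auto.
Qed.

Section Core.
Variables (G : Type) (mul : G -> G -> G) (inv : G -> G) (e : G).
Hypothesis HG : is_group G mul inv e.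

Lemma half_step (A : G) (U : list G) l :
  l < length U + length U ->
  exists s, nth l (U ++ map (mul A) U) e
            = mul (sgpow inv s A) (nth (pp (length U) l) (U ++ map (mul A) U) e).
Proof.
  intros Hl. unfold pp. destruct (Nat.ltb_spec l (length U)).
  - exists false. simpl.
    rewrite app_nth1 by lia. rewrite app_nth2 by lia.
    replace (l + length U - length U) with l by lia.
    rewrite (nth_indep (map (mul A) U) e (mul A e)) by (rewrite length_map; lia).
    rewrite map_nth. rewrite (grp_assoc _ _ _ _ HG), (grp_inv_l _ _ _ _ HG), (grp_unit_l _ _ _ _ HG).
    reflexivity.
  - exists true. simpl.
    rewrite app_nth2 by lia. rewrite app_nth1 by lia.
    rewrite (nth_indep (map (mul A) U) e (mul A e)) by (rewrite length_map; lia).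
    rewrite map_nth. reflexivity.
Qed.

Lemma core (A B : G) (U V : list G) :
  U <> [] ->
  Permutation (U ++ map (mul A) U) (V ++ map (mul B) V) ->
  exists signs, 1 <= length signs /\ alt_word mul inv e A B signs = e.
Proof.
  intros HU HP.
  set (L := U ++ map (mul A) U) in *.
  set (R := V ++ map (mul B) V) in *.
  pose proof (Permutation_length HP) as Hlen.
  assert (HLl : length L = length U + length U) by (unfold L; rewrite length_app, length_map; lia).
  assert (HRl : length R = length V + length V) by (unfold R; rewrite length_app, length_map; lia).
  assert (EUV : length U = length V) by lia.
  set (N := length U + length U).
  destruct (proj1 (Permutation_nth_error L R) HP) as [_ [f0 [Hf0i Hf0]]].
  destruct (proj1 (Permutation_nth_error R L) (Permutation_sym HP)) as [_ [g0 [Hg0i Hg0]]].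
  set (tau := fun r => pp (length V) (g0 (pp (length U) (f0 r)))).
  assert (Hstep : forall r, r < N -> tau r < N /\ exists s1 s2,
     nth r R e = mul (mul (sgpow inv s1 A) (sgpow inv s2 B)) (nth (tau r) R e)).
  { intros r Hr.
    destruct (match_nth L R f0 e Hf0 r ltac:(unfold N in *; lia)) as [B1 E1].
    assert (B2 : pp (length U) (f0 r) < N) by (apply pp_lt; lia).
    destruct (match_nth R L g0 e Hg0 (pp (length U) (f0 r)) ltac:(unfold N in *; lia)) as [B3 E3].
    assert (B4 : tau r < N) by (unfold tau, N; replace (length U + length U) with (length V + length V) by lia; apply pp_lt; lia).
    split; auto.
    destruct (half_step A U (f0 r) ltac:(unfold N in *; lia)) as [s1 H1].
    destruct (half_step B V (g0 (pp (length U) (f0 r))) ltac:(unfold N in *; lia)) as [s2 H2].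
    exists s1, s2. rewrite E1. fold L in H1. rewrite H1. rewrite E3.
    fold R in H2. rewrite H2. apply (grp_assoc _ _ _ _ HG). }
  assert (Hiter : forall k r, r < N -> exists s, length s = k /\
     nth r R e = mul (alt_word mul inv e A B s) (nth (Nat.iter k tau r) R e)).
  { induction k; intros r Hr.
    - exists []. simpl. split; auto. symmetry; apply (grp_unit_l _ _ _ _ HG).
    - destruct (Hstep r Hr) as [Bt [s1 [s2 E]]].
      destruct (IHk (tau r) Bt) as [s [Hs E2]].
      exists ((s1, s2) :: s). split; [simpl; lia|].
      rewrite Nat.iter_succ_r. rewrite E, E2.
      change (alt_word mul inv e A B ((s1,s2)::s)) with
        (mul (mul (sgpow inv s1 A) (sgpow inv s2 B)) (alt_word mul inv e A B s)).
      apply (grp_assoc _ _ _ _ HG). }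
  assert (HN : 0 < N) by (destruct U; [congruence|unfold N; simpl; lia]).
  destruct (iter_return tau N 0) as [k [Hk Ek]]; auto.
  - intros y Hy; apply Hstep; auto.
  - intros y z Hy Hz E. unfold tau in E.
    destruct (match_nth L R f0 e Hf0 y ltac:(unfold N in *; lia)) as [Y1 _].
    destruct (match_nth L R f0 e Hf0 z ltac:(unfold N in *; lia)) as [Z1 _].
    assert (Y2 : pp (length U) (f0 y) < length L) by (rewrite HLl; apply pp_lt; lia).
    assert (Z2 : pp (length U) (f0 z) < length L) by (rewrite HLl; apply pp_lt; lia).
    destruct (match_nth R L g0 e Hg0 _ Y2) as [Y3 _].
    destruct (match_nth R L g0 e Hg0 _ Z2) as [Z3 _].
    apply pp_inj in E; try lia.
    apply Hg0i in E. apply pp_inj in E; try lia.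
    apply Hf0i; auto.
  - destruct (Hiter k 0 HN) as [s [Hs E]].
    exists s. split; [lia|]. rewrite Ek in E.
    set (W := alt_word mul inv e A B s) in *. set (Z := nth 0 R e) in *.
    rewrite <- (grp_unit_r _ _ _ _ HG W).
    rewrite <- (grp_inv_r _ _ _ _ HG Z) at 1.
    rewrite (grp_assoc _ _ _ _ HG). rewrite <- E. apply (grp_inv_r _ _ _ _ HG).
Qed.
End Core.

Theorem lemma1 (M : Type) (mulM : M -> M -> M) (eM : M)
  (G : Type) (mulG : G -> G -> G) (invG : G -> G) (eG : G) (f : M -> G)
  (HM : is_monoid M mulM eM) (HG : is_group G mulG invG eG)
  (Hf : monoid_embedding mulM eM mulG eG f)
  (Hore : zplus_right_ore mulM) :
  forall a b : M, exists signs : list (bool * bool),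
    1 <= length signs /\ alt_word mulG invG eG (f a) (f b) signs = eG.
Proof.
  intros a b. destruct Hf as [_ [Hhom He]].
  destruct (Hore [eM; a] [eM; b]) as [u [v [Hnz HP]]].
  apply (Permutation_map f) in HP.
  assert (Hm : forall c w, map f (zplus_mul mulM [eM; c] w)
                         = map f w ++ map (mulG (f c)) (map f w)).
  { intros c w. unfold zplus_mul. simpl. rewrite app_nil_r, map_app, !map_map.
    f_equal; apply map_ext; intros y; rewrite Hhom; auto.
    rewrite He; apply (grp_unit_l _ _ _ _ HG). }
  rewrite !Hm in HP.
  apply (core G mulG invG eG HG (f a) (f b) (map f u) (map f v)); auto.
  intros E. apply map_eq_nil in E. subst u.
  destruct Hnz as [Hnz|Hnz]; [congruence|].
  apply Permutation_length in HP. simpl in HP. rewrite length_app, !length_map in HP.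
  destruct v; [congruence|simpl in HP; lia].
Qed.
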